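(* Let $\mathcal{P}$ be a set of scripts, let $\Phi$ be the uniform abstraction defined by $\mathcal{P}$, and let $\Omega$ be an asymmetric abstraction defined by the same set of scripts $\mathcal{P}$ (with any choice of unrestricted units $\mathcal{U}'_i(s) \subseteq \mathcal{U}^r_i(s)$ at each state $s$). For a finite match with start state $s$, let $V_i^{\Phi}(s)$ be the optimal value of the game for player $i$ computed in the space induced by $\Phi$, and let $V_i^{\Omega}(s)$ be defined analogously for $\Omega$. Then $V_i^{\Omega}(s) \ge V_i^{\Phi}(s)$.
   Context: A match is a finite two-player zero-sum game with simultaneous moves between players $i$ and $-i$, given by a finite game tree: states $\mathcal{S}=\mathcal{D}\cup\mathcal{F}$ (non-terminal and terminal), a deterministic transition function $\mathcal{T}(s,a_i,a_{-i})$, and a utility $\mathcal{R}_i:\mathcal{F}\to\mathbb{R}$ with $\mathcal{R}_{-i}=-\mathcal{R}_i$. Each state contains units; at state $s$, $\mathcal{U}^r_i(s)$ denotes player $i$'s ready units, and $\mathcal{M}(s,u)$ denotes the set of legal moves of unit $u$ at $s$. A legal action of player $i$ at $s$ is a vector assigning one legal move to each ready unit of $i$; $\mathcal{A}_i(s)$ is the set of such actions. A script $\bar\sigma$ is a function mapping a state $s$ and a unit $u$ to a legal move $\bar\sigma(s,u)\in\mathcal{M}(s,u)$. For a set of scripts $\mathcal{P}$, let $\mathcal{M}(s,u,\mathcal{P})=\{\bar\sigma(s,u):\bar\sigma\in\mathcal{P}\}$. The uniform abstraction $\Phi$ induced by $\mathcal{P}$ restricts player $i$'s actions at each state $s$ to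 $\mathcal{A}'_i(s)$, the Cartesian product of $\mathcal{M}(s,u,\mathcal{P})$ over all $u\in\mathcal{U}^r_i(s)$. An asymmetric abstraction $\Omega$ induced by $\mathcal{P}$ and a set of unrestricted units $\mathcal{U}'_i(s)\subseteq\mathcal{U}^r_i(s)$ restricts player $i$'s actions at $s$ to $\mathcal{A}''_i(s)$, the Cartesian product of $\mathcal{M}(s,u,\mathcal{P})$ over $u\in\mathcal{U}^r_i(s)\setminus\mathcal{U}'_i(s)$ and of $\mathcal{M}(s,u')$ over $u'\in\mathcal{U}'_i(s)$. The optimal value $V_i^{\Phi}$ is defined by backward induction: $V_i^{\Phi}(z)=\mathcal{R}_i(z)$ for terminal $z$, and for non-terminal $s$, $V_i^{\Phi}(s)=\max_{\sigma_i}\min_{\sigma_{-i}}\sum_{a_i}\sum_{a_{-i}\in\mathcal{A}_{-i}(s)}\sigma_i(s,a_i)\sigma_{-i}(s,a_{-i})V_i^{\Phi}(\mathcal{T}(s,a_i,a_{-i}))$, where $\sigma_i$ ranges over probability distributions over $\mathcal{A}'_i(s)$ and $\sigma_{-i}$ over probability distributions over all of $\mathcal{A}_{-i}(s)$ (player $-i$ is unrestricted); $V_i^{\Omega}$ is defined the same way with $\mathcal{A}''_i(s)$ in place of $\mathcal{A}'_i(s)$. *)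

(* Defs.v *)
From HB Require Import structures.
From mathcomp Require Import all_boot all_order all_algebra.
From mathcomp Require Import classical_sets reals.
Set Implicit Arguments. Unset Strict Implicit. Unset Printing Implicit Defensive.
Import Order.TTheory GRing.Theory Num.Theory.
Local Open Scope ring_scope.
Local Open Scope classical_set_scope.

(* A player action at a state: a vector assigning a move to every ready
   unit of that player.  It is encoded as a finite function on all units,
   with [Some m] on ready units and [None] on non-ready units. *)
Definition act (U Mv : finType) := {ffun U -> option Mv}.

Definition prod_action (U Mv : finType) (ready : {set U}) (M : U -> set Mv)
  (a : act U Mv) : Prop :=
  forall u, (u \in ready -> exists2 m, a u = Some m & M u m) /\
            (u \notin ready -> a u = None).

(* Players are booleans: player [p]'s opponent is [~~ p].
   [trans s a b] : [a] is the action of player [true], [b] of player [false].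
   [util] is the utility of player [true] (player [false] gets [- util]).
   Finiteness of the game tree is witnessed by a depth that strictly
   decreases along every legal transition from a non-terminal state. *)
Record game (R : realType) := Game {
  St : finType;
  Un : finType;
  Mv : finType;
  ready : bool -> St -> {set Un};
  moves : St -> Un -> {set Mv};
  trans : St -> act Un Mv -> act Un Mv -> St;
  terminal : pred St;
  util : St -> R;
  depth : St -> nat;
  depth_dec : forall s a b, ~~ terminal s ->
    prod_action (ready true s) (fun u m => m \in moves s u) a ->
    prod_action (ready false s) (fun u m => m \in moves s u) b ->
    (depth (trans s a b) < depth s)%N
}.

Arguments ready {R} g _ _.
Arguments moves {R} g _ _.
Arguments trans {R} g _ _ _.
Arguments terminal {R} g _.
Arguments util {R} g _.
Arguments depth {R} g _.

Section Game.
Variables (R : realType) (G : game R).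

Definition action_of := act (Un G) (Mv G).

Definition legal (p : bool) (s : St G) : set action_of :=
  prod_action (ready G p s) (fun u m => m \in moves G s u).

Definition utilp (p : bool) (z : St G) : R := if p then util G z else - util G z.

Definition transp (p : bool) (s : St G) (a b : action_of) : St G :=
  if p then trans G s a b else trans G s b a.

Definition script := St G -> Un G -> Mv G.
Definition is_script (sc : script) : Prop := forall s u, sc s u \in moves G s u.

Definition script_moves (P : set script) (s : St G) (u : Un G) : set (Mv G) :=
  [set m | exists2 sc, P sc & sc s u = m].

Definition uniform_actions (P : set script) (p : bool) (s : St G) : set action_of :=
  prod_action (ready G p s) (script_moves P s).

Definition asym_actions (P : set script) (Ufree : St G -> {set Un G})
  (p : bool) (s : St G) : set action_of :=
  prod_action (ready G p s)
    (fun u m => if u \in Ufree s then is_true (m \in moves G s u)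
                else script_moves P s u m).

Definition is_dist (A : set action_of) (sg : {ffun action_of -> R}) : Prop :=
  [/\ forall a, 0 <= sg a, forall a, ~ A a -> sg a = 0 & \sum_a sg a = 1].

Fixpoint value_fuel (Ap : St G -> set action_of) (p : bool) (n : nat)
  (s : St G) : R :=
  if terminal G s then utilp p s else
  match n with
  | 0 => 0
  | n'.+1 =>
    sup [set x | exists sg, is_dist (Ap s) sg /\
      x = inf [set y | exists tau, is_dist (legal (~~ p) s) tau /\
        y = \sum_a \sum_b sg a * tau b * value_fuel Ap p n' (transp p s a b)]]
  end.

Definition value (Ap : St G -> set action_of) (p : bool) (s : St G) : R :=
  value_fuel Ap p (depth G s) s.

End Game.

(* Main.v *)
Require Import Defs.
From HB Require Import structures.
From mathcomp Require Import all_boot all_order all_algebra.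
From mathcomp Require Import boolp classical_sets reals.
Import Order.TTheory GRing.Theory Num.Theory.
Local Open Scope ring_scope.
Local Open Scope classical_set_scope.

Lemma inf_mono_aux (R : realType) (T : Type) (Q : set T) (f g : T -> R) (M : R) :
  (forall t, Q t -> f t <= g t) -> (forall t, Q t -> - M <= f t) ->
  inf [set y | exists t, Q t /\ y = f t] <= inf [set y | exists t, Q t /\ y = g t].
Proof.
move=> fg fM.
have [[t0 Qt0]|nQ] := pselect (exists t, Q t).
  apply: lb_le_inf; first by exists (g t0); exists t0.
  move=> y [t [Qt ->]].
  apply: le_trans (fg _ Qt).
  apply: ge_inf; last by exists t.
  by exists (- M) => z [u [Qu ->]]; exact: fM.
have E : forall h : T -> R, [set y | exists t, Q t /\ y = h t] = set0.
  by move=> h; apply/seteqP; split => // y [t [Qt _]]; apply: nQ; exists t.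
by rewrite !E.
Qed.

Lemma inf_le_aux (R : realType) (T : Type) (Q : set T) (f : T -> R) (M : R) :
  0 <= M -> (forall t, Q t -> `|f t| <= M) ->
  inf [set y | exists t, Q t /\ y = f t] <= M.
Proof.
move=> M0 fM.
have [[t0 Qt0]|nQ] := pselect (exists t, Q t).
  apply: (@le_trans _ _ (f t0)).
    apply: ge_inf; last by exists t0.
    exists (- M) => z [u [Qu ->]].
    by have := fM _ Qu; rewrite ler_norml => /andP[].
  by apply: le_trans (ler_norm _) (fM _ Qt0).
have -> : [set y | exists t, Q t /\ y = f t] = set0.
  by apply/seteqP; split => // y [t [Qt _]]; apply: nQ; exists t.
by rewrite inf0.
Qed.

Lemma dist_le1 (R : realType) (G : game R) (A : set (action_of G)) sg a :
  is_dist A sg -> 0 <= sg a <= 1.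
Proof.
case=> h0 _ h1; rewrite h0 /= -h1 (bigD1 a) //= lerDl.
by apply: sumr_ge0 => b _; exact: h0.
Qed.

Lemma sum_bound (R : realType) (G : game R) (A B : set (action_of G)) sg tau
  (f : action_of G -> action_of G -> R) :
  is_dist A sg -> is_dist B tau ->
  `|\sum_a \sum_b sg a * tau b * f a b| <= \sum_a \sum_b `|f a b|.
Proof.
move=> ds dt.
apply: le_trans (ler_norm_sum _ _ _) _; apply: ler_sum => a _.
apply: le_trans (ler_norm_sum _ _ _) _; apply: ler_sum => b _.
have /andP[a0 a1] := @dist_le1 _ _ _ _ a ds.
have /andP[b0 b1] := @dist_le1 _ _ _ _ b dt.
rewrite !normrM (ger0_norm a0) (ger0_norm b0).
rewrite -[leRHS]mul1r; apply: ler_wpM2r => //.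
by rewrite -[1]mul1r; apply: ler_pM.
Qed.

Theorem theorem1 (R : realType) (G : game R) (P : set (script G))
  (Ufree : St G -> {set Un G}) (i : bool) (s : St G) :
  (forall sc, P sc -> is_script sc) ->
  P !=set0 ->
  (forall t, Ufree t \subset ready G i t) ->
  value (uniform_actions P i) i s <= value (asym_actions P Ufree i) i s.
Proof.
move=> Pscr [sc Psc] _.
have UA : forall t a, uniform_actions P i t a -> asym_actions P Ufree i t a.
  move=> t a Ha u; have [H1 H2] := Ha u; split => // /H1 [m am sm].
  exists m => //; case: ifP => // _.
  by case: sm => sc' Psc' <-; exact: Pscr.
rewrite /value; move: (depth G s) => n; elim: n s => [|n IH] s /=.
  by case: ifP.
case: ifP => // _.
set fU := value_fuel _ _ _.
set fA := value_fuel _ _ _.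
set L := legal (G:=G) (~~ i) s.
pose M := \sum_a \sum_b `|fA (transp i s a b)|.
have M0 : 0 <= M by apply: sumr_ge0 => a _; apply: sumr_ge0 => b _.
apply: ge_sup.
  pose a0 : action_of G := [ffun u => if u \in ready G i s then Some (sc s u) else None].
  have Ua0 : uniform_actions P i s a0.
    move=> u; rewrite ffunE; split; first by move=> ->; exists (sc s u) => //; exists sc.
    by move/negbTE => ->.
  pose sg0 : {ffun action_of G -> R} := [ffun a => if a == a0 then 1 else 0].
  have : is_dist (uniform_actions P i s) sg0.
    split.
    - by move=> a; rewrite ffunE; case: ifP.
    - by move=> a Na; rewrite ffunE; case: eqP => // E; rewrite E in Na.
    - rewrite (bigD1 a0) //= big1 ?ffunE ?eqxx ?addr0 // => b /negbTE nb.
      by rewrite ffunE nb.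
  by move=> d; eexists; exists sg0; split; first exact: d.
move=> x [sg [dsg ->]].
have dsgA : is_dist (asym_actions P Ufree i s) sg.
  case: dsg => h0 h1 h2; split => // a Na; apply: h1 => /UA; exact: Na.
apply: (@le_trans _ _ (inf [set y | exists tau, is_dist L tau /\
      y = \sum_a \sum_b sg a * tau b * fA (transp i s a b)])).
  apply: (@inf_mono_aux _ _ _ _ _ (\sum_a \sum_b `|fU (transp i s a b)|)).
    move=> tau dt; apply: ler_sum => a _; apply: ler_sum => b _.
    have /andP[a0 _] := @dist_le1 _ _ _ _ a dsg.
    have /andP[b0 _] := @dist_le1 _ _ _ _ b dt.
    by apply: ler_wpM2l; [exact: mulr_ge0 | exact: IH].
  move=> tau dt; have := @sum_bound _ _ _ _ _ _ (fun a b => fU (transp i s a b)) dsg dt.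
  by rewrite ler_norml => /andP[].
apply: ub_le_sup; last by exists sg.
exists M => z [sg' [ds' ->]].
apply: inf_le_aux => // tau dt.
exact: (@sum_bound _ _ _ _ _ _ (fun a b => fA (transp i s a b)) ds' dt).
Qed.
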